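(* Let $A,B,C,D\in\mathcal{B}(\mathcal{H})$. Then for all $r\geq1$, $$w^{r}\left(\begin{bmatrix}A&B\\C&D\end{bmatrix}\right)\leq 4^{r-1}\,w\left(\begin{bmatrix}w^r(A)&\|B\|^r\\ \|C\|^r&w^r(D)\end{bmatrix}\right),$$ where on the right $w$ is the numerical radius of a $2\times2$ complex matrix acting on $\mathbb{C}^2$.
   Context: $\mathcal{H}$ is a complex Hilbert space, $\mathcal{B}(\mathcal{H})$ the bounded linear operators on it, and $w(T)=\sup\{|\langle Tz,z\rangle|:\|z\|=1\}$ the numerical radius (on any Hilbert space). The operator matrix $\begin{bmatrix}A&B\\C&D\end{bmatrix}$ acts on $\mathcal{H}\oplus\mathcal{H}$ by $(x,y)\mapsto(Ax+By,Cx+Dy)$. *)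

(* Defs.v *)
From HB Require Import structures.
From mathcomp Require Import all_boot all_order all_algebra.
From mathcomp Require Import complex.
From mathcomp Require Import classical_sets reals exp.
Set Implicit Arguments. Unset Strict Implicit. Unset Printing Implicit Defensive.
Import Order.TTheory GRing.Theory Num.Theory ComplexField.
Local Open Scope ring_scope.
Local Open Scope classical_set_scope.

Section Defs.
Variable R : realType.

Definition ipnorm (T : Type) (ip : T -> T -> R[i]) (z : T) : R :=
  Num.sqrt (complex.Re (ip z z)).

Definition is_hilbert (V : lmodType R[i]) (ip : V -> V -> R[i]) : Prop :=
  [/\ (forall a x y z, ip (a *: x + y) z = a * ip x z + ip y z),
      (forall x y, ip y x = conjc (ip x y)),
      (forall x, 0 <= complex.Re (ip x x)),
      (forall x, ip x x = 0 -> x = 0) &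
      (forall u : nat -> V,
         (forall e : R, 0 < e -> exists N : nat, forall m n : nat,
             (N <= m)%N -> (N <= n)%N -> ipnorm ip (u m - u n) < e) ->
         exists x : V, forall e : R, 0 < e -> exists N : nat, forall n : nat,
             (N <= n)%N -> ipnorm ip (u n - x) < e)].

Definition bounded_op (V : lmodType R[i]) (ip : V -> V -> R[i]) (T : V -> V) : Prop :=
  (forall a x y, T (a *: x + y) = a *: T x + T y) /\
  exists M : R, forall x, ipnorm ip (T x) <= M * ipnorm ip x.

Definition numrad (X : Type) (ip : X -> X -> R[i]) (T : X -> X) : R :=
  sup [set r : R | exists z : X, ipnorm ip z = 1 /\ r = ComplexField.Normc.normc (ip (T z) z)].

Definition opnorm (X : Type) (ip : X -> X -> R[i]) (T : X -> X) : R :=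
  sup [set r : R | exists z : X, ipnorm ip z <= 1 /\ r = ipnorm ip (T z)].

Definition ip_sum (X : Type) (ip : X -> X -> R[i]) (p q : X * X) : R[i] :=
  ip p.1 q.1 + ip p.2 q.2.

Definition opmat (V : lmodType R[i]) (A B C D : V -> V) (p : V * V) : V * V :=
  (A p.1 + B p.2, C p.1 + D p.2).

Definition ipC2 (u v : 'cV[R[i]]_2) : R[i] :=
  \sum_(k < 2) u k ord0 * conjc (v k ord0).

Definition mx2 (a b c d : R[i]) : 'M[R[i]]_2 :=
  \matrix_(i < 2, j < 2)
    (if i == ord0 then (if j == ord0 then a else b)
                  else (if j == ord0 then c else d)).

Definition numrad_mx2 (M : 'M[R[i]]_2) : R := numrad ipC2 (fun z => M *m z).

End Defs.

(* Main.v *)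
Require Import Defs.
From HB Require Import structures.
From mathcomp Require Import all_boot all_order all_algebra.
From mathcomp Require Import complex.
From mathcomp Require Import classical_sets reals exp.
From mathcomp Require Import ring lra boolp.
From mathcomp Require Import interval_inference convex hoelder.
Import Order.TTheory GRing.Theory Num.Theory ComplexField.
Local Open Scope ring_scope.
Local Open Scope complex_scope.
Local Open Scope classical_set_scope.

Section Pow.
Variable R : realType.
Local Open Scope convex_scope.

Lemma half_cvx (p x y : R): 1 <= p -> 0 <= x -> 0 <= y ->
  (2^-1 * x + 2^-1 * y) `^ p <= 2^-1 * x `^ p + 2^-1 * y `^ p.
Proof.
move=> p1 x0 y0.
rewrite {2 4}(_ : 2^-1 = 1 - 2^-1 :> R); last by rewrite {2}(splitr 1) div1r addrK.
by apply: (convex_powR p1 (Itv01 _ _)) => //=;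
  rewrite ?inE/= ?in_itv/= ?andbT // ?invr_ge0// invf_le1 ?ler1n.
Qed.

Lemma pm2 (r x y : R) : 1 <= r -> 0 <= x -> 0 <= y ->
  (x + y) `^ r <= 2 `^ (r - 1) * (x `^ r + y `^ r).
Proof.
move=> r1 x0 y0.
have -> : x + y = 2 * (2^-1 * x + 2^-1 * y) by field.
rewrite powRM // ?addr_ge0 ?mulr_ge0 ?invr_ge0 //.
rewrite powRB ?powRr1 //; last by apply/implyP => _; rewrite pnatr_eq0.
rewrite -mulrA ler_wpM2l ?powR_ge0 //.
have := half_cvx _ _ _ r1 x0 y0; lra.
Qed.

Lemma pm4 (r p q u v : R) : 1 <= r -> 0 <= p -> 0 <= q -> 0 <= u -> 0 <= v ->
  (p + q + u + v) `^ r <= 4 `^ (r - 1) * (p `^ r + q `^ r + u `^ r + v `^ r).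
Proof.
move=> r1 p0 q0 u0 v0.
rewrite -addrA.
apply: le_trans (pm2 _ _ _ r1 (addr_ge0 p0 q0) (addr_ge0 u0 v0)) _.
have -> : (4 : R) = 2 * 2 by rewrite -natrM.
rewrite powRM // -mulrA ler_wpM2l ?powR_ge0 //.
have h1 := pm2 _ _ _ r1 p0 q0; have h2 := pm2 _ _ _ r1 u0 v0.
have := powR_ge0 2 (r - 1); nra.
Qed.

Lemma pow_le_self (x r : R) : 0 <= x <= 1 -> 1 <= r -> x `^ r <= x.
Proof.
move=> /andP[x0 x1] r1; have [->|xn0] := eqVneq x 0.
  by rewrite powR0 // gt_eqF // (lt_le_trans ltr01 r1).
by apply: ge1r_powR => //; rewrite lt_neqAle eq_sym xn0 x0.
Qed.
End Pow.

Section Gen.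
Variable R : realType.
Lemma normcR (c : R) : Normc.normc c%:C = `|c|.
Proof. by rewrite /= expr0n addr0 sqrtr_sqr. Qed.

Lemma conjR (c : R) : (c%:C)^* = c%:C :> R[i].
Proof. by rewrite /= oppr0. Qed.

Lemma normcJ (c : R[i]) : Normc.normc (c^*) = Normc.normc c.
Proof. by case: c => a b /=; rewrite sqrrN. Qed.

Lemma sup_ub' (S : set R) b x : (forall y, S y -> y <= b) -> S x -> x <= sup S.
Proof. by move=> hb Sx; apply: ub_le_sup => //; exists b. Qed.



Lemma sup_ge0' (S : set R) b : (forall y, S y -> 0 <= y) -> (forall y, S y -> y <= b) ->
  0 <= sup S.
Proof.
move=> h0 hb; have [[x Sx]|ne] := pselect (S !=set0).
  exact: (le_trans (h0 _ Sx) (sup_ub' S b x hb Sx)).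
have -> : S = set0 by apply/seteqP; split => // x Sx; apply: ne; exists x.
by rewrite sup0.
Qed.



Lemma sup_le' (S : set R) b : (forall y, S y -> y <= b) -> 0 <= b -> sup S <= b.
Proof.
move=> hb b0; have [ne|ne] := pselect (S !=set0); first exact: ge_sup.
have -> : S = set0 by apply/seteqP; split => // x Sx; apply: ne; exists x.
by rewrite sup0.
Qed.




Lemma normc_ge0 (c : R[i]) : 0 <= Normc.normc c.
Proof. by case: c => a b /=; exact: sqrtr_ge0. Qed.
End Gen.
Arguments sup_ub' {R S b x}.
Arguments sup_ge0' {R S b}.
Arguments sup_le' {R S b}.

Section M2.
Variable R : realType.
Lemma w0 : widen_ord (leqnSn 1) (@ord_max 0) = ord0 :> 'I_2.
Proof. by apply: val_inj. Qed.

Lemma ipC2E (u v : 'cV[R[i]]_2) : ipC2 u v =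
  u ord0 ord0 * (v ord0 ord0)^* + u ord_max ord0 * (v ord_max ord0)^*.
Proof. by rewrite /ipC2 !big_ord_recr big_ord0 /= add0r w0. Qed.

Lemma mulE (a b c d : R[i]) (v : 'cV[R[i]]_2) :
  (mx2 a b c d *m v) ord0 ord0 = a * v ord0 ord0 + b * v ord_max ord0 /\
  (mx2 a b c d *m v) ord_max ord0 = c * v ord0 ord0 + d * v ord_max ord0.
Proof.
by rewrite !mxE !big_ord_recr !big_ord0 /= !add0r !mxE /= w0.
Qed.


Lemma ReJ (x : R[i]) : complex.Re (x * x^*) = Normc.normc x ^+ 2.
Proof.
case: x => a b /=; rewrite sqr_sqrtr ?addr_ge0 ?sqr_ge0 //; ring.
Qed.

Lemma unit2 (v : 'cV[R[i]]_2) : ipnorm (@ipC2 R) v = 1 ->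
  Normc.normc (v ord0 ord0) ^+ 2 + Normc.normc (v ord_max ord0) ^+ 2 = 1.
Proof.
rewrite /ipnorm ipC2E raddfD /= !ReJ => h.
have := sqr_sqrtr (addr_ge0 (sqr_ge0 (Normc.normc (v ord0 ord0)))
          (sqr_ge0 (Normc.normc (v ord_max ord0)))).
by rewrite h expr1n.
Qed.

Lemma le1sq (x y : R) : 0 <= x -> x ^+ 2 + y ^+ 2 = 1 -> x <= 1.
Proof. move=> x0 h; have := sqr_ge0 y; nra. Qed.

Lemma mx_bnd a b c d (v : 'cV[R[i]]_2) : ipnorm (@ipC2 R) v = 1 ->
  Normc.normc (ipC2 (mx2 a b c d *m v) v) <=
  Normc.normc a + Normc.normc b + Normc.normc c + Normc.normc d.
Proof.
move=> /unit2 h; have [e0 e1] := mulE a b c d v; rewrite ipC2E e0 e1.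
move: h; set v0 := v ord0 ord0; set v1 := v ord_max ord0 => h.
apply: le_trans (le_normcD _ _) _.
rewrite !Normc.normcM !normcJ.
have := le_normcD (a * v0) (b * v1); have := le_normcD (c * v0) (d * v1).
rewrite !Normc.normcM.
have := normc_ge0 _ a; have := normc_ge0 _ b; have := normc_ge0 _ c; have := normc_ge0 _ d.
have := normc_ge0 _ v0; have := normc_ge0 _ v1.
set na := Normc.normc a; set nb := Normc.normc b; set nc := Normc.normc c.
set nd := Normc.normc d; set n0 := Normc.normc v0; set n1 := Normc.normc v1.
set X := Normc.normc (a * v0 + b * v1); set Y := Normc.normc (c * v0 + d * v1).
move=> h1 h0 hd hc hb ha hY hX.
have n01 : n0 <= 1 by apply: (le1sq _ _ h0 h).
have n11 : n1 <= 1 by rewrite addrC in h; apply: (le1sq _ _ h1 h).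
have X0 : 0 <= X by exact: normc_ge0.
have Y0 : 0 <= Y by exact: normc_ge0.
nra.
Qed.

Lemma mx_lb (a b c d t s : R) : 0 <= t -> 0 <= s -> t ^+ 2 + s ^+ 2 = 1 ->
  `|a * t ^+ 2 + b * t * s + c * t * s + d * s ^+ 2| <= numrad_mx2 (mx2 a%:C b%:C c%:C d%:C).
Proof.
move=> t0 s0 ts.
pose v : 'cV[R[i]]_2 := \col_i (if i == ord0 then t%:C else s%:C).
have v1 : ipnorm (@ipC2 R) v = 1.
  rewrite /ipnorm ipC2E !mxE /= !(oppr0, mulr0, mul0r, subr0, addr0) -!expr2 ts.
  exact: sqrtr1.
apply: (@sup_ub' _ _ (Normc.normc a%:C + Normc.normc b%:C + Normc.normc c%:C + Normc.normc d%:C)).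
  by move=> _ [z [z1 ->]]; apply: mx_bnd.
exists v; split => //.
have [e0 e1] := mulE a%:C b%:C c%:C d%:C v; rewrite ipC2E e0 e1 !mxE /=.
rewrite !(oppr0, mulr0, mul0r, subr0, addr0, add0r) expr0n addr0 sqrtr_sqr.
congr Num.norm; ring.
Qed.
End M2.

Section Hil.
Variables (R : realType) (V : lmodType R[i]) (ip : V -> V -> R[i]).
Hypothesis Hip : is_hilbert ip.
Local Notation nm := (ipnorm ip).

Lemma ipL a x y z : ip (a *: x + y) z = a * ip x z + ip y z.
Proof. by move: Hip => [h ? ? ? ?]; apply: h. Qed.
Lemma ipC x y : ip y x = (ip x y)^*.
Proof. by move: Hip => [? h ? ? ?]; apply: h. Qed.
Lemma ipRe_ge0 x : 0 <= complex.Re (ip x x).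
Proof. by move: Hip => [? ? h ? ?]; apply: h. Qed.
Lemma ipdef x : ip x x = 0 -> x = 0.
Proof. by move: Hip => [? ? ? h ?]; apply: h. Qed.

Lemma ip0l z : ip 0 z = 0.
Proof.
have := ipL 1 0 0 z; rewrite scale1r addr0 mul1r => /eqP.
by rewrite -subr_eq0 opprD addrA subrr sub0r oppr_eq0 => /eqP.
Qed.
Lemma ipDl x y z : ip (x + y) z = ip x z + ip y z.
Proof. by rewrite -{1}[x]scale1r ipL mul1r. Qed.
Lemma ipZl a x z : ip (a *: x) z = a * ip x z.
Proof. by rewrite -[a *: x]addr0 ipL ip0l addr0. Qed.
Lemma ip0r z : ip z 0 = 0.
Proof. by rewrite ipC ip0l conjc0. Qed.
Lemma ipDr x y z : ip z (x + y) = ip z x + ip z y.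
Proof. by rewrite ipC ipDl rmorphD /= -!ipC. Qed.
Lemma ipZr a x z : ip z (a *: x) = a^* * ip z x.
Proof. by rewrite ipC ipZl rmorphM /= -ipC. Qed.

Lemma ipIm x : complex.Im (ip x x) = 0.
Proof.
have := ipC x x; case: (ip x x) => a b /= [] /eqP.
by rewrite -subr_eq0 opprK -mulr2n mulrn_eq0 /= => /eqP.
Qed.

Lemma ipE x : ip x x = (nm x ^+ 2)%:C.
Proof.
rewrite /ipnorm sqr_sqrtr ?ipRe_ge0 //.
by move: (ipIm x); case: (ip x x) => a b /= ->.
Qed.

Lemma nm_ge0 x : 0 <= nm x.
Proof. exact: sqrtr_ge0. Qed.

Lemma nm0 : nm 0 = 0.
Proof. by rewrite /ipnorm ip0l /= sqrtr0. Qed.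

Lemma nm_eq0 x : nm x = 0 -> x = 0.
Proof. by move=> h; apply: ipdef; rewrite ipE h expr0n. Qed.

Lemma nmZ a x : nm (a *: x) = Normc.normc a * nm x.
Proof.
rewrite /ipnorm ipZl ipZr mulrA.
move: (ipIm x) (ipRe_ge0 x); case: (ip x x) => p q /= -> hp.
case: a => a1 a2 /=.
rewrite -sqrtrM; last by rewrite addr_ge0 // sqr_ge0.
congr Num.sqrt.
simpc. rewrite /=.
ring.
Qed.

Lemma CS x y : Normc.normc (ip x y) <= nm x * nm y.
Proof.
have [->|y0] := eqVneq y 0; first by rewrite ip0r Normc.normc0 nm0 mulr0.
have sp : 0 < nm y.
  rewrite lt_neqAle nm_ge0 andbT eq_sym; apply/negP => /eqP /nm_eq0 /eqP.
  by rewrite (negbTE y0).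
have := ipRe_ge0 ((nm y ^+ 2)%:C *: x + (- ip x y) *: y).
rewrite !ipDl !ipDr !ipZl !ipZr (ipC x y) !ipE.
set s := nm y; set t := nm x.
case: (ip x y) => p1 p2 /= H.
have -> : t * s = Num.sqrt ((t * s) ^+ 2).
  by rewrite sqrtr_sqr ger0_norm // mulr_ge0 // nm_ge0.
idtac.
have s2 : 0 < s ^+ 2 by rewrite exprn_gt0.
rewrite ler_sqrt ?sqr_ge0 //.
set S := s ^+ 2 in H s2 *.
rewrite exprMn -/S.
have e : S * (S * t ^+ 2 - (p1 ^+ 2 + p2 ^+ 2)) >= 0 by lra.
rewrite pmulr_rge0 // subr_ge0 in e; lra.
Qed.

Section Op.
Variable T : V -> V.
Hypothesis hT : bounded_op ip T.

Lemma T0 : T 0 = 0.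
Proof.
case: hT => hl _; have := hl 1 0 0; rewrite scale1r addr0 scale1r => /eqP.
by rewrite -subr_eq0 opprD addrA subrr sub0r oppr_eq0 => /eqP.
Qed.

Lemma TZ a x : T (a *: x) = a *: T x.
Proof. by case: hT => hl _; rewrite -[a *: x]addr0 hl T0 addr0. Qed.

Lemma TD x y : T (x + y) = T x + T y.
Proof. by case: hT => hl _; have := hl 1 x y; rewrite !scale1r. Qed.

Lemma bnd : exists M, 0 <= M /\ forall x, nm (T x) <= M * nm x.
Proof.
case: hT => _ [M hM]; exists `|M|; split => // x.
by apply: le_trans (hM x) _; rewrite ler_wpM2r ?nm_ge0 ?ler_norm.
Qed.

Lemma nrm_unit z : z != 0 ->
  let u := ((nm z)^-1)%:C *: z in nm u = 1 /\ 0 < nm z.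
Proof.
move=> z0 u.
have sp : 0 < nm z.
  rewrite lt_neqAle nm_ge0 andbT eq_sym; apply/negP => /eqP /nm_eq0 /eqP.
  by rewrite (negbTE z0).
split => //; rewrite /u nmZ normcR ger0_norm ?invr_ge0 ?nm_ge0 //.
by rewrite mulVf // gt_eqF.
Qed.

Lemma opnorm_bnd : exists M, forall y,
  [set r : R | exists z : V, nm z <= 1 /\ r = nm (T z)] y -> y <= M.
Proof.
have [M [M0 hM]] := bnd; exists M => _ [z [z1 ->]].
by apply: le_trans (hM z) _; rewrite ler_piMr.
Qed.

Lemma opnorm_ge0 : 0 <= opnorm ip T.
Proof.
have [M hM] := opnorm_bnd.
by apply: (sup_ge0' _ hM) => _ [z [_ ->]]; exact: nm_ge0.
Qed.

Lemma opnorm_ub z : nm (T z) <= opnorm ip T * nm z.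
Proof.
have [->|z0] := eqVneq z 0; first by rewrite T0 nm0 mulr0.
have [u1 sp] := nrm_unit z z0.
have [M hM] := opnorm_bnd.
have u1' : nm (((nm z)^-1)%:C *: z) <= 1 by rewrite u1.
have := sup_ub' hM (ex_intro _ _ (conj u1' erefl)).
rewrite TZ nmZ normcR ger0_norm ?invr_ge0 ?nm_ge0 // -/(opnorm ip T).
by rewrite ler_pdivrMl // mulrC.
Qed.

Lemma numrad_bnd : exists M, forall y,
  [set r : R | exists z : V, nm z = 1 /\ r = Normc.normc (ip (T z) z)] y -> y <= M.
Proof.
have [M [M0 hM]] := bnd; exists M => _ [z [z1 ->]].
apply: le_trans (CS _ _) _; rewrite z1 mulr1.
by apply: le_trans (hM z) _; rewrite z1 mulr1.
Qed.

Lemma numrad_ge0 : 0 <= numrad ip T.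
Proof.
have [M hM] := numrad_bnd.
by apply: (sup_ge0' _ hM) => _ [z [_ ->]]; case: (ip (T z) z) => a b /=; exact: sqrtr_ge0.
Qed.

Lemma numrad_ub z : Normc.normc (ip (T z) z) <= numrad ip T * nm z ^+ 2.
Proof.
have [->|z0] := eqVneq z 0; first by rewrite T0 ip0l nm0 Normc.normc0 expr0n mulr0.
have [u1 sp] := nrm_unit z z0.
have [M hM] := numrad_bnd.
have := sup_ub' hM (ex_intro _ _ (conj u1 erefl)).
rewrite TZ ipZl ipZr !Normc.normcM normcJ !normcR ger0_norm ?invr_ge0 ?nm_ge0 //.
rewrite -/(numrad ip T) mulrA => h; rewrite mulrC.
apply: le_trans (ler_wpM2l (exprn_ge0 2 (nm_ge0 z)) h).
by rewrite mulrA -invfM -expr2 mulfV ?mul1r // expf_neq0 // gt_eqF.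
Qed.
End Op.

Lemma main_lemma (A B C D : V -> V)
  (hA : bounded_op ip A) (hB : bounded_op ip B)
  (hC : bounded_op ip C) (hD : bounded_op ip D) (r : R) (hr : 1 <= r) :
  numrad (ip_sum ip) (opmat A B C D) `^ r <=
  4 `^ (r - 1) *
  numrad_mx2 (mx2 ((numrad ip A `^ r)%:C) ((opnorm ip B `^ r)%:C)
                  ((opnorm ip C `^ r)%:C) ((numrad ip D `^ r)%:C)).
Proof.
set a0 := numrad ip A; set b0 := opnorm ip B; set c0 := opnorm ip C; set d0 := numrad ip D.
set W := numrad_mx2 _.
have r0 : 0 < r by apply: lt_le_trans hr.
have a00 : 0 <= a0 by exact: numrad_ge0.
have d00 : 0 <= d0 by exact: numrad_ge0.
have b00 : 0 <= b0 by exact: opnorm_ge0.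
have c00 : 0 <= c0 by exact: opnorm_ge0.
have W0 : 0 <= W.
  have := mx_lb _ (a0 `^ r) (b0 `^ r) (c0 `^ r) (d0 `^ r) 1 0 (@ler01 R) (lexx (0:R)).
  rewrite expr1n expr0n addr0 => /(_ erefl) h; exact: le_trans (normr_ge0 _) h.
set K := 4 `^ (r - 1) * W.
have K0 : 0 <= K by rewrite mulr_ge0 ?powR_ge0.
have key : forall z, ipnorm (ip_sum ip) z = 1 ->
    Normc.normc (ip_sum ip (opmat A B C D z) z) <= K `^ r^-1.
  move=> [x y] z1.
  set t := nm x; set s := nm y.
  have t0 : 0 <= t by exact: nm_ge0.
  have s0 : 0 <= s by exact: nm_ge0.
  have ts : t ^+ 2 + s ^+ 2 = 1.
    move: z1; rewrite /ipnorm /ip_sum /= !ipE /= -/t -/s => h.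
    by have := sqr_sqrtr (addr_ge0 (sqr_ge0 t) (sqr_ge0 s)); rewrite h expr1n.
  have t1 : t <= 1 by apply: (le1sq _ _ _ t0 ts).
  have s1 : s <= 1 by rewrite addrC in ts; apply: (le1sq _ _ _ s0 ts).
  set X := a0 * t ^+ 2 + b0 * (t * s) + c0 * (t * s) + d0 * s ^+ 2.
  have X0 : 0 <= X by rewrite !addr_ge0 // !mulr_ge0.
  have h1 : Normc.normc (ip_sum ip (opmat A B C D (x, y)) (x, y)) <= X.
    rewrite /ip_sum /opmat /= !ipDl.
    apply: le_trans (le_normcD _ _) _.
    have hAx := numrad_ub A hA x.
    have hDy := numrad_ub D hD y.
    have hBy := le_trans (CS (B y) x) (ler_wpM2r (nm_ge0 x) (opnorm_ub B hB y)).
    have hCx := le_trans (CS (C x) y) (ler_wpM2r (nm_ge0 y) (opnorm_ub C hC x)).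
    have := le_normcD (ip (A x) x) (ip (B y) x).
    have := le_normcD (ip (C x) y) (ip (D y) y).
    rewrite -/t -/s -/a0 -/b0 -/c0 -/d0 in hAx hDy hBy hCx *.
    rewrite /X; nra.
  have h2 : X `^ r <= K.
    apply: le_trans (pm4 _ _ _ _ _ _ hr _ _ _ _) _; rewrite ?mulr_ge0 //.
    rewrite /K ler_wpM2l ?powR_ge0 //.
    have ts0 : 0 <= t * s by rewrite mulr_ge0.
    have ts1 : t * s <= 1 by rewrite mulr_ile1.
    have t20 : 0 <= t ^+ 2 by rewrite sqr_ge0.
    have t21 : t ^+ 2 <= 1 by rewrite expr_le1.
    have s20 : 0 <= s ^+ 2 by rewrite sqr_ge0.
    have s21 : s ^+ 2 <= 1 by rewrite expr_le1.
    rewrite (@powRM _ a0 (t ^+ 2) r a00 t20) (@powRM _ b0 (t * s) r b00 ts0).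
    rewrite (@powRM _ c0 (t * s) r c00 ts0) (@powRM _ d0 (s ^+ 2) r d00 s20).
    have e1 := pow_le_self _ (t ^+ 2) r (ltac:(by rewrite t20 t21)) hr.
    have e2 := pow_le_self _ (t * s) r (ltac:(by rewrite ts0 ts1)) hr.
    have e3 := pow_le_self _ (s ^+ 2) r (ltac:(by rewrite s20 s21)) hr.
    have := mx_lb _ (a0 `^ r) (b0 `^ r) (c0 `^ r) (d0 `^ r) t s t0 s0 ts.
    rewrite -/W => hW.
    have hn := le_trans (ler_norm _) hW.
    rewrite -[b0 `^ r * t * s]mulrA -[c0 `^ r * t * s]mulrA in hn.
    have pa := powR_ge0 a0 r; have pb := powR_ge0 b0 r.
    have pc := powR_ge0 c0 r; have pd := powR_ge0 d0 r.
    have la := ler_wpM2l pa e1; have lb := ler_wpM2l pb e2.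
    have lc := ler_wpM2l pc e2; have ld := ler_wpM2l pd e3.
    lra.
  apply: le_trans h1 _.
  have -> : X = (X `^ r) `^ r^-1.
    by rewrite -powRrM mulfV ?gt_eqF // powRr1.
  by apply: (@ge0_ler_powR _ r^-1 _ (X `^ r) K _ _ h2); rewrite ?invr_ge0 ?ltW ?nnegrE ?powR_ge0.
have bnd : forall y, [set r0 : R | exists z, ipnorm (ip_sum ip) z = 1 /\
    r0 = Normc.normc (ip_sum ip (opmat A B C D z) z)] y -> y <= K `^ r^-1.
  by move=> _ [z [z1 ->]]; exact: key.
have hsup := sup_le' bnd (powR_ge0 K r^-1).
have nr0 := sup_ge0' (fun y (hy : [set r0 : R | exists z, ipnorm (ip_sum ip) z = 1 /\
    r0 = Normc.normc (ip_sum ip (opmat A B C D z) z)] y) =>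
    match hy with ex_intro z (conj _ e) => eq_ind_r (fun u => 0 <= u) (normc_ge0 _ _) e end) bnd.
rewrite -/(numrad (ip_sum ip) (opmat A B C D)) in hsup nr0.
apply: le_trans (ge0_ler_powR (ltW r0) _ _ hsup) _; rewrite ?nnegrE ?powR_ge0 //.
by rewrite -powRrM mulVf ?gt_eqF // powRr1.
Qed.
End Hil.

Theorem theorem4p2 (R : realType) (V : lmodType R[i]) (ip : V -> V -> R[i])
  (Hip : is_hilbert ip) (A B C D : V -> V)
  (hA : bounded_op ip A) (hB : bounded_op ip B)
  (hC : bounded_op ip C) (hD : bounded_op ip D) (r : R) (hr : 1 <= r) :
  numrad (ip_sum ip) (opmat A B C D) `^ r <=
  4 `^ (r - 1) *
  numrad_mx2 (mx2 ((numrad ip A `^ r)%:C) ((opnorm ip B `^ r)%:C)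
                  ((opnorm ip C `^ r)%:C) ((numrad ip D `^ r)%:C)).
Proof. exact: (@main_lemma R V ip Hip A B C D hA hB hC hD r hr). Qed.
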